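(* Let $r\ge1$ and let $p_1,p_2,\ldots,p_r$ be primes, each $\ge5$ (not necessarily distinct). Then for every $n\ge0$, \[ b_2\!\left(\prod_{s=1}^{r-1}p_s^2\,p_{r}\, n+\frac{(24j+1)\prod_{s=1}^{r-1}p_s^2-1}{24}\right)\equiv 0 \pmod 2 \] for every integer $j$ with $0\le j\le p_r-1$ and $\left(\frac{24j+1}{p_r}\right)=-1$ (with the empty product equal to $1$).
   Context: For a positive integer $\ell$, $b_\ell(n)$ denotes the number of partitions of $n$ having no part divisible by $\ell$. $\left(\frac{a}{p}\right)$ is the Legendre symbol. *)

(* Defs.v *)
From mathcomp Require Import all_boot all_algebra.
Set Implicit Arguments. Unset Strict Implicit. Unset Printing Implicit Defensive.

(* A partition of n is encoded by its multiplicity function: f i is the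
   number of parts equal to i.+1 (parts range over 1..n, multiplicities
   over 0..n). *)
Definition is_partition_mult (n : nat) (f : {ffun 'I_n -> 'I_n.+1}) : bool :=
  \sum_(i < n) i.+1 * f i == n.

Definition b (l n : nat) : nat :=
  #|[set f : {ffun 'I_n -> 'I_n.+1} | is_partition_mult f &&
      [forall i : 'I_n, (l %| i.+1) ==> (val (f i) == 0)]]|.

Definition legendre (a p : nat) : int :=
  if p %| a then 0%R
  else if [exists x : 'I_p, (x ^ 2) %% p == a %% p] then 1%R
  else (-1)%R.

(* Main.v *)
Require Import Defs.
From mathcomp Require Import all_boot all_algebra.
From mathcomp Require Import zify ring.
Set Implicit Arguments. Unset Strict Implicit. Unset Printing Implicit Defensive.

Definition lastle (P : pred nat) (B : nat) :=
  B - find (fun d => P (B - d)) (iota 0 B.+1).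

Lemma lastleP (P : pred nat) B x : x <= B -> P x ->
  [/\ lastle P B <= B, P (lastle P B) & forall y, lastle P B < y <= B -> ~~ P y].
Proof.
move=> xB Px; rewrite /lastle.
set d := find _ _.
have hh : has (fun d => P (B - d)) (iota 0 B.+1).
  apply/hasP; exists (B - x); first by rewrite mem_iota; lia.
  by rewrite subKn.
have dlt : d < B.+1 by move: hh; rewrite has_find size_iota.
split; first by rewrite leq_subr.
  by have := nth_find 0 hh; rewrite -/d nth_iota // add0n.
move=> y /andP[h1 h2].
have lt : B - y < d by lia.
have := before_find 0 lt.
rewrite nth_iota; last by lia.
by rewrite add0n subKn // => ->.
Qed.

Lemma lastle_eq (P : pred nat) B a : a <= B -> P a ->
  (forall y, a < y <= B -> ~~ P y) -> lastle P B = a.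
Proof.
move=> aB Pa hy; have [h1 h2 h3] := lastleP aB Pa.
apply/eqP; rewrite eqn_leq; apply/andP; split.
  rewrite leqNgt; apply/negP => lt; by move: (hy (lastle P B)); rewrite lt h1 h2 => /(_ isT).
rewrite leqNgt; apply/negP => lt; by move: (h3 a); rewrite lt aB Pa => /(_ isT).
Qed.

Definition firstle (P : pred nat) (B : nat) := find P (iota 0 B.+1).

Lemma firstleP (P : pred nat) B x : x <= B -> P x ->
  [/\ firstle P B <= x, P (firstle P B) & forall y, y < firstle P B -> ~~ P y].
Proof.
move=> xB Px; rewrite /firstle.
have hh : has P (iota 0 B.+1).
  by apply/hasP; exists x => //; rewrite mem_iota; lia.
have dlt : find P (iota 0 B.+1) < B.+1 by move: hh; rewrite has_find size_iota.
have bf : forall y, y < find P (iota 0 B.+1) -> ~~ P y.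
  move=> y lt; have := before_find 0 lt.
  rewrite nth_iota ?add0n; first by move=> ->.
  lia.
split => //.
  by rewrite leqNgt; apply/negP => /bf; rewrite Px.
by have := nth_find 0 hh; rewrite nth_iota // add0n.
Qed.

Section Fr.
Variable N : nat.
Definition memg (g : {ffun 'I_N -> bool}) (x : nat) := [exists i : 'I_N, g i && (i.+1 == x)].
Definition mkg (P : pred nat) : {ffun 'I_N -> bool} := [ffun i : 'I_N => P i.+1].
Definition sumg (g : {ffun 'I_N -> bool}) := \sum_(i < N) i.+1 * g i.

Lemma memg_ord g (i : 'I_N) : memg g i.+1 = g i.
Proof.
apply/existsP/idP => [[k /andP[gk /eqP e]]|gi]; last by exists i; rewrite gi eqxx.
by have -> : i = k by apply/val_inj; case: e.
Qed.

Lemma memg_range g x : memg g x -> 0 < x <= N.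
Proof. by case/existsP => k /andP[_ /eqP <-]; rewrite ltn_ord. Qed.

Lemma memg_mk P x : memg (mkg P) x = P x && (0 < x <= N).
Proof.
case: x => [|x]; first by rewrite /= andbF; apply/negbTE/negP => /memg_range.
case: (ltnP x N) => [lt|ge].
  by rewrite (memg_ord _ (Ordinal lt)) ffunE /= andbT.
rewrite !andbF; apply/negbTE/negP => /memg_range; lia.
Qed.

Lemma memg_ext g h : (forall x, memg g x = memg h x) -> g = h.
Proof. by move=> e; apply/ffunP => i; rewrite -!memg_ord e. Qed.

Lemma sumgE g : sumg g = \sum_(x < N.+1) x * memg g x.
Proof.
rewrite big_ord_recl /= mul0n add0n /sumg; apply: eq_bigr => i _.
by rewrite /bump /= add1n memg_ord.
Qed.

Lemma sum_ind a : a <= N -> \sum_(x < N.+1) x * (val x == a) = a.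
Proof.
move=> aN; rewrite (bigD1 (Ordinal (aN : a < N.+1))) //= eqxx muln1 big1 ?addn0 //.
by move=> i ne; case: eqP => [e|]; rewrite ?muln0 //; case/eqP: ne; apply/val_inj.
Qed.

Lemma sum_le2 g a c : memg g a -> memg g c -> a != c -> a + c <= sumg g.
Proof.
move=> ma mc ne; rewrite sumgE.
have ra := memg_range ma; have rc := memg_range mc.
rewrite -(@sum_ind a) ?(andP ra).2 // -(@sum_ind c) ?(andP rc).2 // -big_split /=.
apply: leq_sum => x _; rewrite -mulnDr leq_mul2l; apply/orP; right.
case: (eqVneq (x : nat) a) => [->|_]; first by rewrite (negbTE ne) ma.
by case: (eqVneq (x : nat) c) => [->|_] //; rewrite mc.
Qed.


Definition sM (g : {ffun 'I_N -> bool}) := lastle (memg g) N.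
Definition ss (g : {ffun 'I_N -> bool}) := firstle (memg g) N.
Definition sgp (g : {ffun 'I_N -> bool}) := lastle (fun x => ~~ memg g x) (sM g).-1.

Definition opA (g : {ffun 'I_N -> bool}) := mkg (fun x => (memg g x && (x != ss g) && (x != sM g - ss g + 1)) || (x == (sM g).+1)).
Definition opB (g : {ffun 'I_N -> bool}) := mkg (fun x => (memg g x && (x != sM g)) || (x == sgp g) || (x == sM g - sgp g)).

Definition Fr (g : {ffun 'I_N -> bool}) :=
  if ~~ [exists i, g i] then g else
  if ss g <= sM g - sgp g then
    (if ((sgp g).+1 == ss g) && (ss g == sM g - sgp g) then g else opA g)
  else
    (if ((sgp g).+1 == ss g) && (ss g == (sM g - sgp g).+1) then g else opB g).

Section Facts.
Variables (g : {ffun 'I_N -> bool}) (x0 : nat) (m0 : memg g x0).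

Lemma ne_g : [exists i, g i].
Proof. case/existsP: m0 => i /andP[gi _]; by apply/existsP; exists i. Qed.

Let r0 := memg_range m0.

Let xN : x0 <= N. Proof. by case/andP: r0. Qed.
Let FP := @firstleP (memg g) N x0 xN m0.
Let LP := @lastleP (memg g) N x0 xN m0.

Lemma ss_mem : memg g (ss g).
Proof. by case: FP. Qed.

Lemma ss_min y : y < ss g -> ~~ memg g y.
Proof. by case: FP => _ _; apply. Qed.

Lemma sM_mem : memg g (sM g).
Proof. by case: LP. Qed.

Lemma sM_max y : sM g < y -> ~~ memg g y.
Proof.
move=> lt; case: (leqP y N) => yN.
  by case: LP => _ _; apply; rewrite lt.
by apply/negP => /memg_range; lia.
Qed.

Lemma ss_range : 0 < ss g <= sM g.
Proof.
have := memg_range ss_mem; case/andP => -> _ /=.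
by rewrite leqNgt; apply/negP => /ss_min; rewrite sM_mem.
Qed.

Lemma sM_range : 0 < sM g <= N.
Proof. exact: memg_range sM_mem. Qed.

Lemma sgp_facts : [/\ sgp g < sM g, ~~ memg g (sgp g)
   & forall y, sgp g < y <= sM g -> memg g y].
Proof.
have mn0 : ~~ memg g 0 by apply/negP => /memg_range.
have := sM_range; case/andP => M1 _.
case: (lastleP (x := 0) (P := fun x => ~~ memg g x) (B := (sM g).-1)) => // h1 h2 h3.
split => //; first by rewrite /sgp; lia.
move=> y /andP[l1 l2]; case: (eqVneq y (sM g)) => [->|ne]; first exact: sM_mem.
by have := h3 y; rewrite l1 /= negbK; apply; lia.
Qed.

Lemma s_le_gp1 : ss g <= (sgp g).+1.
Proof.
case: sgp_facts => h1 h2 h3; case/andP: ss_range => s1 sM1.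
rewrite leqNgt; apply/negP => lt.
have m : memg g (ss g).-1 by apply: h3; apply/andP; split; lia.
have : ~~ memg g (ss g).-1 by apply: ss_min; lia.
by rewrite m.
Qed.

End Facts.

Lemma ss_eq (g : {ffun 'I_N -> bool}) a : memg g a -> (forall y, y < a -> ~~ memg g y) -> ss g = a.
Proof.
move=> ma hy; have := ss_mem ma; have := ss_min ma => h1 h2.
apply/eqP; rewrite eqn_leq; apply/andP; split; rewrite leqNgt; apply/negP => lt.
  by move: (h1 _ lt); rewrite ma.
by move: (hy _ lt); rewrite h2.
Qed.

Lemma sM_eq (g : {ffun 'I_N -> bool}) a : memg g a -> (forall y, a < y -> ~~ memg g y) -> sM g = a.
Proof.
move=> ma hy; have := sM_mem ma; have := sM_max ma => h1 h2.
apply/eqP; rewrite eqn_leq; apply/andP; split; rewrite leqNgt; apply/negP => lt.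
  by move: (hy _ lt); rewrite h2.
by move: (h1 _ lt); rewrite ma.
Qed.

Lemma sgp_eq (g : {ffun 'I_N -> bool}) a : a < sM g -> ~~ memg g a -> (forall y, a < y < sM g -> memg g y) -> sgp g = a.
Proof.
move=> aM na hy; rewrite /sgp; apply: lastle_eq => //; first lia.
move=> y /andP[l1 l2]; rewrite negbK; apply: hy; lia.
Qed.


Lemma memg_rng (g : {ffun 'I_N -> bool}) y : memg g y && (0 < y <= N) = memg g y.
Proof. by case m: (memg g y) => //=; apply: memg_range m. Qed.

Lemma sum_pw (g h : {ffun 'I_N -> bool}) a b c :
  a <= N -> b <= N -> c <= N ->
  (forall y, y <= N -> memg h y + (y == a) + (y == b) = memg g y + (y == c)) ->
  sumg h + a + b = sumg g + c.
Proof.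
move=> aN bN cN pw; rewrite !sumgE -{1}(sum_ind aN) -(sum_ind bN) -(sum_ind cN) -!big_split.
by apply: eq_bigr => x _ /=; rewrite -!mulnDr pw // -ltnS.
Qed.

Lemma caseA (g : {ffun 'I_N -> bool}) x0 : memg g x0 -> sumg g = N ->
  ss g <= sM g - sgp g ->
  ~~ (((sgp g).+1 == ss g) && (ss g == sM g - sgp g)) ->
  [/\ sumg (opA g) = N, Fr (opA g) = g & opA g != g].
Proof.
move=> m0 sN hA hne.
have ms := ss_mem m0; have smin := ss_min m0; have mM := sM_mem m0; have Mmax := sM_max m0.
case/andP: (ss_range m0) => s1 sM1; case/andP: (sM_range m0) => M1 MN.
case: (sgp_facts m0) => gM ngp run; have sg := s_le_gp1 m0.
have memA y : memg (opA g) y = ((memg g y && (y != ss g) && (y != sM g - ss g + 1)) || (y == (sM g).+1)) && (0 < y <= N) by rewrite memg_mk.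
have [s es] : {s | ss g = s} by exists (ss g).
have [M eM] : {M | sM g = M} by exists (sM g).
have [gp egp] : {gp | sgp g = gp} by exists (sgp g).
rewrite es eM egp in memA ms smin mM Mmax s1 sM1 M1 MN gM ngp run sg hA hne.
have gpt : gp < M - s + 1 by lia.
have mt : memg g (M - s + 1) by apply: run; lia.
have st : s < M - s + 1.
  have le : s <= M - s + 1 by rewrite leqNgt; apply/negP => /smin; rewrite mt.
  by case/nandP: hne => /eqP h; lia.
have M1N : M.+1 <= N.
  have := sum_le2 ms mM (_ : s != M); rewrite sN => h; (have : s != M by apply/eqP; lia) => /h; lia.
have nM1 : ~~ memg g M.+1 by apply: Mmax.
have pw y : y <= N -> memg (opA g) y + (y == s) + (y == M - s + 1) = memg g y + (y == M.+1).
  move=> yN; rewrite memA.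
  have [->|ys] := eqVneq y s.
    have -> : (s == M - s + 1) = false by apply/eqP; lia.
    have -> : (s == M.+1) = false by apply/eqP; lia.
    by rewrite ms.
  have [->|yt] := eqVneq y (M - s + 1).
    have -> : (M - s + 1 == M.+1) = false by apply/eqP; lia.
    by rewrite mt.
  have [->|yM] := eqVneq y M.+1.
    by rewrite (negbTE nM1) /= M1N.
  by rewrite /= !andbT orbF memg_rng !addn0.
have sumA : sumg (opA g) = N.
  have := sum_pw (_ : s <= N) (_ : M - s + 1 <= N) M1N pw; lia.
split => //; last first.
  apply/negP => /eqP e; have := memA s; rewrite e ms /= eqxx /=.
  by have -> : (s == M.+1) = false by apply/eqP; lia.
have mh : memg (opA g) M.+1 by rewrite memA eqxx orbT /= M1N.
have sMh : sM (opA g) = M.+1.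
  apply: sM_eq => // y lt; rewrite memA (negbTE (Mmax _ _)); last lia.
  by have -> : (y == M.+1) = false by apply/eqP; lia.
have sgph : sgp (opA g) = M - s + 1.
  apply: sgp_eq; rewrite ?sMh; first lia.
    rewrite memA eqxx /= andbF /=; apply/eqP; lia.
  move=> y /andP[l1 l2]; rewrite memA run; last lia.
  have -> : (y != s) by apply/eqP; lia.
  have -> : (y != M - s + 1) by apply/eqP; lia.
  by rewrite /=; apply/andP; split; lia.
have ssh : s < ss (opA g).
  have := ss_mem mh; rewrite memA; have [-> _|ne] := eqVneq (ss (opA g)) M.+1; first lia.
  rewrite orbF andbC => /andP[_ /andP[/andP[m1 n1] _]].
  have := smin (ss (opA g)); rewrite m1; move=> h; rewrite ltn_neqAle eq_sym n1 /=.
  by rewrite leqNgt; apply/negP => /h.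
rewrite /Fr (ne_g mh) /= sMh sgph.
have -> : (ss (opA g) <= M.+1 - (M - s + 1)) = false by apply/negbTE; rewrite -ltnNge; lia.
have -> : ((M - s + 1).+1 == ss (opA g)) && (ss (opA g) == (M.+1 - (M - s + 1)).+1) = false.
  by apply/negbTE/negP => /andP[/eqP e1 /eqP e2]; lia.
apply: memg_ext => y; rewrite /opB memg_mk sMh sgph memA.
have -> : M.+1 - (M - s + 1) = s by lia.
have [->|yM] := eqVneq y M.+1.
  rewrite (negbTE nM1) andbF /=.
  have -> : (M.+1 == M - s + 1) = false by apply/eqP; lia.
  by have -> : (M.+1 == s) = false by apply/eqP; lia.
have [->|yt] := eqVneq y (M - s + 1).
  by rewrite /= orbT /= mt; apply/andP; split; lia.
have [->|ys] := eqVneq y s.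
  by rewrite /= !orbT /= ms; apply/andP; split; lia.
by rewrite /= !orbF !andbT !memg_rng.
Qed.

Lemma caseB (g : {ffun 'I_N -> bool}) x0 : memg g x0 -> sumg g = N ->
  ~~ (ss g <= sM g - sgp g) ->
  ~~ (((sgp g).+1 == ss g) && (ss g == (sM g - sgp g).+1)) ->
  [/\ sumg (opB g) = N, Fr (opB g) = g & opB g != g].
Proof.
move=> m0 sN hB hne.
have ms := ss_mem m0; have smin := ss_min m0; have mM := sM_mem m0; have Mmax := sM_max m0.
case/andP: (ss_range m0) => s1 sM1; case/andP: (sM_range m0) => M1 MN.
case: (sgp_facts m0) => gM ngp run; have sg := s_le_gp1 m0.
have memB y : memg (opB g) y = ((memg g y && (y != sM g)) || (y == sgp g) || (y == sM g - sgp g)) && (0 < y <= N) by rewrite memg_mk.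
have [s es] : {s | ss g = s} by exists (ss g).
have [M eM] : {M | sM g = M} by exists (sM g).
have [gp egp] : {gp | sgp g = gp} by exists (sgp g).
rewrite es eM egp in memB ms smin mM Mmax s1 sM1 M1 MN gM ngp run sg hB hne.
rewrite -ltnNge in hB.
have gp1 : 0 < gp by lia.
have sgg : M - gp < gp by case/nandP: hne => /eqP h; lia.
have ns : ~~ memg g (M - gp) by apply: smin.
have pw y : y <= N -> memg g y + (y == gp) + (y == M - gp) = memg (opB g) y + (y == M).
  move=> yN; rewrite memB.
  have [->|yg] := eqVneq y gp.
    have -> : (gp == M - gp) = false by apply/eqP; lia.
    have -> : (gp == M) = false by apply/eqP; lia.
    rewrite (negbTE ngp) /=; lia.
  have [->|ysg] := eqVneq y (M - gp).
    have -> : (M - gp == M) = false by apply/eqP; lia.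
    rewrite (negbTE ns) /=; lia.
  have [->|yM] := eqVneq y M; first by rewrite mM /=; lia.
  by rewrite /= !orbF andbT memg_rng !addn0.
have sumB : sumg (opB g) = N.
  have := sum_pw (_ : gp <= N) (_ : M - gp <= N) MN pw; lia.
split => //; last first.
  apply/negP => /eqP e; have := memB M; rewrite e mM /=; lia.
have mh : memg (opB g) (M - gp) by rewrite memB; lia.
have ssh : ss (opB g) = M - gp.
  apply: ss_eq => // y lt; rewrite memB (negbTE (smin _ _)); last lia.
  have -> : (y == gp) = false by apply/eqP; lia.
  by have -> : (y == M - gp) = false by apply/eqP; lia.
have sMh : sM (opB g) = M.-1.
  apply: sM_eq.
    rewrite memB; have [->|ne] := eqVneq M.-1 gp; first lia.
    rewrite run; last lia.
    have -> : M.-1 != M by apply/eqP; lia.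
    by rewrite /=; apply/andP; split; lia.
  move=> y lt; rewrite memB.
  have -> : (y == gp) = false by apply/eqP; lia.
  have -> : (y == M - gp) = false by apply/eqP; lia.
  have [->|ne] := eqVneq y M; first by rewrite /= andbF.
  by rewrite (negbTE (Mmax _ _)) //; lia.
case: (sgp_facts mh); rewrite sMh => ghM ngh _.
have ghg : sgp (opB g) < gp.
  rewrite ltnNge; apply/negP => le; move: ngh; rewrite memB.
  have [->|ne] := eqVneq (sgp (opB g)) gp; first lia.
  rewrite run; last lia.
  have -> : sgp (opB g) != M by apply/eqP; lia.
  rewrite /=; lia.
rewrite /Fr (ne_g mh) /= ssh sMh.
have -> : (M - gp <= M.-1 - sgp (opB g)) by lia.
have -> : ((sgp (opB g)).+1 == M - gp) && (M - gp == M.-1 - sgp (opB g)) = false.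
  by apply/negbTE/negP => /andP[/eqP e1 /eqP e2]; lia.
apply: memg_ext => y; rewrite /opA memg_mk ssh sMh memB.
have -> : M.-1 - (M - gp) + 1 = gp by lia.
have -> : M.-1.+1 = M by lia.
have [->|yM] := eqVneq y M.
  rewrite mM /=; apply/andP; split; lia.
have [->|yg] := eqVneq y gp; first by rewrite /= andbF /= (negbTE ngp).
have [->|ys] := eqVneq y (M - gp); first by rewrite /= !andbF /= (negbTE ns).
by rewrite /= !orbF !andbT !memg_rng.
Qed.


Lemma tri n s M : s <= M.+1 ->
  2 * (\sum_(x < n) x * (s <= x <= M)) + minn n s * (minn n s).-1
  = minn n M.+1 * (minn n M.+1).-1.
Proof.
move=> sM; elim: n => [|n IH]; first by rewrite big_ord0 !min0n.
rewrite big_ord_recr /= mulnDr.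
case: (ltnP n s) => h1.
  have -> : minn n.+1 s = n.+1 by apply/minn_idPl; lia.
  have -> : minn n.+1 M.+1 = n.+1 by apply/minn_idPl; lia.
  have e1 : minn n s = n by apply/minn_idPl; lia.
  have e2 : minn n M.+1 = n by apply/minn_idPl; lia.
  rewrite e1 e2 in IH.
  rewrite /= ?andbF. set T := \sum_(i < n) _ in IH *. lia.
case: (leqP n M) => h2.
  have -> : minn n.+1 s = s by apply/minn_idPr; lia.
  have -> : minn n.+1 M.+1 = n.+1 by apply/minn_idPl; lia.
  have e1 : minn n s = s by apply/minn_idPr; lia.
  have e2 : minn n M.+1 = n by apply/minn_idPl; lia.
  rewrite e1 e2 in IH.
  rewrite ?h1 ?h2 /=; set T := \sum_(i < n) _ in IH *; nia.
have -> : minn n.+1 s = s by apply/minn_idPr; lia.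
have -> : minn n.+1 M.+1 = M.+1 by apply/minn_idPr; lia.
have e1 : minn n s = s by apply/minn_idPr; lia.
have e2 : minn n M.+1 = M.+1 by apply/minn_idPr; lia.
rewrite e1 e2 in IH.
rewrite /= ?andbF; set T := \sum_(i < n) _ in IH *.
lia.
Qed.

Lemma interval_sum (g : {ffun 'I_N -> bool}) s M : 0 < s -> s <= M -> M <= N ->
  (forall y, memg g y = (s <= y <= M)) -> 2 * sumg g + s * s.-1 = M.+1 * M.
Proof.
move=> s1 sM MN hy; rewrite sumgE (eq_bigr (fun x : 'I_N.+1 => x * (s <= x <= M))); last by move=> x _; rewrite hy.
have := tri N.+1 (_ : s <= M.+1).
have -> : minn N.+1 s = s by apply/minn_idPr; lia.
have -> : minn N.+1 M.+1 = M.+1 by apply/minn_idPr; lia.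
move=> h; rewrite h; lia.
Qed.

Lemma exc_sq (g : {ffun 'I_N -> bool}) x0 : memg g x0 -> sumg g = N ->
  (sgp g).+1 = ss g -> (ss g = sM g - sgp g \/ ss g = (sM g - sgp g).+1) ->
  exists m, 24 * N + 1 = m ^ 2.
Proof.
move=> m0 sN e1 e2.
have ms := ss_mem m0; have smin := ss_min m0; have mM := sM_mem m0; have Mmax := sM_max m0.
case/andP: (ss_range m0) => s1 sM1; case/andP: (sM_range m0) => M1 MN.
case: (sgp_facts m0) => gM ngp run.
have hy y : memg g y = (ss g <= y <= sM g).
  apply/idP/idP => [m|/andP[l1 l2]].
    apply/andP; split; rewrite leqNgt; apply/negP; [move/smin|move/Mmax]; by rewrite m.
  by apply: run; lia.
have := interval_sum s1 sM1 MN hy; rewrite sN.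
move: (ss g) (sM g) (sgp g) e1 e2 s1 sM1 => s M gp e1 e2 s1 sM1 h.
case: e2 => e2.
  exists (6 * s - 1); nia.
exists (6 * s - 5); nia.
Qed.

End Fr.

Lemma inv_parity (T : finType) (f : T -> T) n (A : {set T}) : #|A| = n ->
  (forall x, x \in A -> f x \in A /\ f (f x) = x) -> (forall x, x \in A -> f x != x) ->
  ~~ odd n.
Proof.
elim/ltn_ind: n A => n IH A cA hf hn.
case: (posnP n) => [->//|n0].
have [x xA] : exists x, x \in A by apply/card_gt0P; rewrite cA.
have [fxA ffx] := hf x xA; have nfx := hn x xA.
set A' := A :\ x :\ f x.
have c1 : #|A| = (#|A'|).+2.
  rewrite (cardsD1 x A) xA (cardsD1 (f x) (A :\ x)) !inE fxA nfx.
  by rewrite add1n.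
have hf' : forall y, y \in A' -> f y \in A' /\ f (f y) = y.
  move=> y; rewrite !inE => /and3P[y1 y2 yA]; have [fyA ffy] := hf y yA.
  split => //; rewrite fyA andbT; apply/andP; split; apply/negP => /eqP e.
    by move: y2; rewrite -ffy e ffx eqxx.
  by move: y1; rewrite -ffy e eqxx.
have hn' : forall y, y \in A' -> f y != y by move=> y; rewrite !inE => /and3P[_ _ /hn].
have := IH (#|A'|) (_ : #|A'| < n) A' erefl hf' hn'.
by rewrite -cA c1 /= negbK; apply; lia.
Qed.

Lemma Fr_props N (g : {ffun 'I_N -> bool}) : sumg g = N ->
  [/\ sumg (Fr g) = N, Fr (Fr g) = g & (Fr g = g -> exists m, 24 * N + 1 = m ^ 2)].
Proof.
move=> sN; case: (boolP [exists i, g i]) => [/existsP[i gi]|ne].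
  have m0 : memg g i.+1 by rewrite memg_ord.
  case hA: (ss g <= sM g - sgp g).
    case hex: (((sgp g).+1 == ss g) && (ss g == sM g - sgp g)).
      have eF : Fr g = g by rewrite /Fr (ne_g m0) /= hA hex.
      by rewrite eF; split => // _; case/andP: hex => /eqP e1 /eqP e2; apply: (exc_sq m0) => //; left.
    have eF : Fr g = opA g by rewrite /Fr (ne_g m0) /= hA hex.
    have [h1 h2 h3] := caseA m0 sN hA (negbT hex).
    by rewrite eF; split => // e; move: h3; rewrite e eqxx.
  case hex: (((sgp g).+1 == ss g) && (ss g == (sM g - sgp g).+1)).
    have eF : Fr g = g by rewrite /Fr (ne_g m0) /= hA hex.
    by rewrite eF; split => // _; case/andP: hex => /eqP e1 /eqP e2; apply: (exc_sq m0) => //; right.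
  have eF : Fr g = opB g by rewrite /Fr (ne_g m0) /= hA hex.
  have [h1 h2 h3] := caseB m0 sN (negbT hA) (negbT hex).
  by rewrite eF; split => // e; move: h3; rewrite e eqxx.
have e : Fr g = g by rewrite /Fr ne.
rewrite e; split => // _; exists 1.
have : sumg g = 0.
  rewrite /sumg big1 // => i _; move: ne; rewrite negb_exists => /forallP /(_ i).
  by move/negbTE => ->; rewrite muln0.
lia.
Qed.

Lemma D_odd N : odd #|[set g : {ffun 'I_N -> bool} | sumg g == N]| -> exists m, 24 * N + 1 = m ^ 2.
Proof.
move=> od.
case: (boolP [exists g in [set g : {ffun 'I_N -> bool} | sumg g == N], Fr g == g]) => [|H].
  case/exists_inP => g; rewrite inE => /eqP sg /eqP fg.
  by have [_ _ h] := Fr_props sg; apply: h.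
move: od; rewrite -[odd _]negbK; move/negP; case.
apply: (@inv_parity _ (@Fr N) _ _ erefl).
  move=> x; rewrite inE => /eqP sx; have [h1 h2 _] := Fr_props sx.
  by rewrite inE h1 eqxx.
move=> x xin; apply/negP => fx; move/negP: H; apply; apply/exists_inP; exists x => //.
Qed.

Import GRing.Theory.

Section GF.
Variable N : nat.
Local Open Scope ring_scope.

Definition cong (a b : {poly int}) := forall k, (k <= N)%N -> a`_k = b`_k.

Lemma cong_refl a : cong a a. Proof. by []. Qed.
Lemma cong_sym a b : cong a b -> cong b a. Proof. by move=> h k kN; rewrite h. Qed.
Lemma cong_trans a b c : cong a b -> cong b c -> cong a c.
Proof. by move=> h1 h2 k kN; rewrite h1 ?h2. Qed.

Lemma congM a a' b b' : cong a a' -> cong b b' -> cong (a * b) (a' * b').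
Proof.
move=> h1 h2 k kN; rewrite !coefM; apply: eq_bigr => j _.
rewrite h1 ?h2 //; have := ltn_ord j; lia.
Qed.

Lemma cong_prod (I : Type) (r : seq I) (P : pred I) (F G : I -> {poly int}) :
  (forall i, P i -> cong (F i) (G i)) ->
  cong (\prod_(i <- r | P i) F i) (\prod_(i <- r | P i) G i).
Proof. by move=> h; apply: (big_ind2 cong) => //; exact: congM. Qed.

Lemma cong_Xn k : (N < k)%N -> cong 'X^k 0.
Proof. by move=> lt j jN; rewrite coefXn coef0; case: eqP => // e; lia. Qed.

Lemma congD a a' b b' : cong a a' -> cong b b' -> cong (a + b) (a' + b').
Proof. by move=> h1 h2 k kN; rewrite !coefD h1 ?h2. Qed.

Lemma congB a a' b b' : cong a a' -> cong b b' -> cong (a - b) (a' - b').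
Proof. by move=> h1 h2 k kN; rewrite !coefB h1 ?h2. Qed.

Lemma cong_1X k : (N < k)%N -> cong (1 - 'X^k) 1.
Proof. by move=> lt; rewrite -[X in cong _ X]subr0; apply: congB => //; apply: cong_Xn. Qed.

Lemma cong_X1 k : (N < k)%N -> cong ('X^k + 1) 1.
Proof. by move=> lt; rewrite -[X in cong _ X]add0r; apply: congD => //; apply: cong_Xn. Qed.

Definition Geo p : {poly int} := \sum_(m < N.+1) 'X^(p * m).

Lemma geo_mul p n : (\sum_(m < n) 'X^(p * m)) * (1 - 'X^p) = 1 - 'X^(p * n) :> {poly int}.
Proof.
elim: n => [|n IH]; first by rewrite big_ord0 mul0r muln0 expr0 subrr.
rewrite big_ord_recr /= mulrDl IH mulnS exprD.
ring.
Qed.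

Lemma geo_cong p : (0 < p)%N -> cong (Geo p * (1 - 'X^p)) 1.
Proof. move=> p0; rewrite geo_mul; apply: cong_1X; nia. Qed.

Lemma geo_big p : (N < p)%N -> cong (Geo p) 1.
Proof.
move=> lt k kN; rewrite /Geo coef_sum big_ord_recl /= muln0 coefXn big1 ?addr0 //.
move=> i _; rewrite coefXn; case: eqP => // e; move: e; rewrite /bump /=; nia.
Qed.

Lemma ext_prod (G : nat -> {poly int}) : (forall i, (N <= i)%N -> cong (G i) 1) ->
  cong (\prod_(i < N) G i) (\prod_(i < N.*2) G i).
Proof.
move=> h; rewrite -addnn big_split_ord /=.
rewrite -[X in cong X _]mulr1; apply: congM => //.
have : cong (\prod_(i < N) G (N + i)%N) (\prod_(i < N) 1).
  by apply: cong_prod => i _; apply: h; lia.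
by rewrite big1_eq => h2; exact: cong_sym h2.
Qed.

Lemma pair_prod (G : nat -> {poly int}) n :
  \prod_(i < n.*2) G i = \prod_(j < n) (G j.*2 * G j.*2.+1).
Proof.
elim: n => [|n IH]; first by rewrite !big_ord0.
by rewrite doubleS !big_ord_recr /= IH mulrA.
Qed.


Definition FAn (i : nat) : {poly int} :=
  \sum_(m < N.+1) ((((2 %| i.+1)%N ==> (val m == 0%N)) : bool) : nat)%:R * 'X^(i.+1 * m).
Definition FDn (i : nat) : {poly int} := \sum_(c : bool) (true : nat)%:R * 'X^(i.+1 * c).

Lemma FA_odd i : ~~ (2 %| i.+1)%N -> FAn i = Geo i.+1.
Proof. by move=> h; apply: eq_bigr => m _; rewrite (negbTE h) /= mul1r. Qed.

Lemma FA_even i : (2 %| i.+1)%N -> FAn i = 1.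
Proof.
move=> h; rewrite /FAn big_ord_recl /= h /= muln0 expr0 mul1r big1 ?addr0 // => m _.
by rewrite /bump /= mul0r.
Qed.

Lemma FD_eq i : FDn i = 'X^(i.+1) + 1.
Proof. by rewrite /FDn big_bool /= !mul1r muln1 muln0 expr0. Qed.

Lemma FA_big i : (N <= i)%N -> cong (FAn i) 1.
Proof.
move=> h; case: (boolP (2 %| i.+1)%N) => d; first by rewrite FA_even.
by rewrite FA_odd //; apply: geo_big; lia.
Qed.

Lemma glaisher : cong (\prod_(i < N) FAn i) (\prod_(i < N) FDn i).
Proof.
pose A2 : {poly int} := \prod_(j < N) Geo j.*2.+1.
pose D2 : {poly int} := \prod_(i < N.*2) ('X^(i.+1) + 1).
pose U2 : {poly int} := \prod_(j < N) (1 - 'X^(j.*2.+1)).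
pose W2 : {poly int} := \prod_(j < N) (1 - 'X^(j.*2.+2)).
pose G2 : {poly int} := \prod_(j < N) Geo j.*2.+2.
have hA : cong (\prod_(i < N) FAn i) A2.
  apply: cong_trans (ext_prod FA_big) _; rewrite pair_prod.
  rewrite /A2; apply: cong_prod => j _.
  rewrite FA_odd ?FA_even ?mulr1 //; by rewrite dvdn2 /= ?negbK odd_double.
have hD : cong (\prod_(i < N) FDn i) D2.
  apply: cong_trans (ext_prod (G := FDn) _) _.
    by move=> i h; rewrite FD_eq; apply: cong_X1; lia.
  by rewrite /D2; apply: cong_prod => i _; rewrite FD_eq.
have aU : cong (A2 * U2) 1.
  rewrite /A2 /U2 -big_split /=.
  have : cong (\prod_(j < N) (Geo j.*2.+1 * (1 - 'X^(j.*2.+1)))) (\prod_(j < N) 1).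
    by apply: cong_prod => j _; apply: geo_cong.
  by rewrite big1_eq.
have wG : cong (W2 * G2) 1.
  rewrite /W2 /G2 -big_split /=.
  have : cong (\prod_(j < N) ((1 - 'X^(j.*2.+2)) * Geo j.*2.+2)) (\prod_(j < N) 1).
    by apply: cong_prod => j _; rewrite mulrC; apply: geo_cong.
  by rewrite big1_eq.
have dV : cong (D2 * (U2 * W2)) W2.
  have -> : U2 * W2 = \prod_(i < N.*2) (1 - 'X^(i.+1)).
    by rewrite (pair_prod (fun i => 1 - 'X^(i.+1))) /U2 /W2 -big_split.
  rewrite /D2 -big_split /=.
  rewrite (eq_bigr (fun i : 'I_N.*2 => 1 - 'X^((i : nat).+1.*2))); last first.
    move=> i _; have e : ((i : nat).+1.*2) = (i.+1 + i.+1)%N by rewrite addnn.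
    by rewrite e exprD; ring.
  apply: cong_sym; apply: cong_trans (ext_prod (G := fun i => 1 - 'X^(i.+1.*2)) _).
    by rewrite /W2; apply: cong_prod => j _; rewrite doubleS.
  by move=> i h; apply: cong_1X; lia.
have dU : cong (D2 * U2) 1.
  apply: cong_trans (_ : cong _ (D2 * U2 * (W2 * G2))) _.
    by rewrite -[X in cong X _]mulr1; apply: congM => //; exact: cong_sym wG.
  have -> : D2 * U2 * (W2 * G2) = D2 * (U2 * W2) * G2 by rewrite !mulrA.
  exact: cong_trans (congM dV (cong_refl G2)) wG.
apply: cong_trans hA _; apply: cong_sym; apply: cong_trans hD _.
apply: cong_trans (_ : cong _ (D2 * (A2 * U2))) _.
  by rewrite -[X in cong X _]mulr1; apply: congM => //; exact: cong_sym aU.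
have -> : D2 * (A2 * U2) = A2 * (D2 * U2) by rewrite mulrCA.
by rewrite -[X in cong _ X]mulr1; apply: congM.
Qed.


Lemma prod_bool (I : finType) (b : I -> bool) : (\prod_(i : I) (b i : nat))%N = [forall i, b i] :> nat.
Proof.
case: (boolP [forall i, b i]) => [/forallP h|/forallPn[i hi]].
  by rewrite big1 // => i _; rewrite h.
by rewrite (bigD1 i) //= (negbTE hi) mul0n.
Qed.

Lemma prod_CX (I : finType) (b : I -> nat) (e : I -> nat) :
  \prod_(i : I) ((b i)%:R * 'X^(e i)) = (\prod_i b i)%N%:R * 'X^(\sum_i e i) :> {poly int}.
Proof. by rewrite big_split /= prodrXr natr_prod. Qed.

Lemma coef_count (J : finType) (w : 'I_N -> J -> nat) (a : 'I_N -> J -> bool) :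
  (\prod_(i < N) \sum_(j : J) ((a i j : nat)%:R * 'X^(w i j)) : {poly int})`_N
  = (#|[set f : {ffun 'I_N -> J} | [forall i, a i (f i)] && ((\sum_(i < N) w i (f i))%N == N)]| : nat)%:R.
Proof.
rewrite bigA_distr_bigA coef_sum.
set P := fun f : {ffun 'I_N -> J} => [forall i, a i (f i)] && ((\sum_(i < N) w i (f i))%N == N).
have -> : #|[set f | P f]| = (\sum_f (P f : nat))%N.
  rewrite -sum1_card big_mkcond /=; apply: eq_bigr => f _; rewrite inE; by case: (P f).
rewrite natr_sum; apply: eq_bigr => f _; rewrite /P.
rewrite prod_CX prod_bool mulr_natl coefMn coefXn eq_sym.
by case: [forall i, _]; case: (_ == _).
Qed.

End GF.


Lemma small24 r : r < 24 -> r %% 2 != 0 -> r %% 3 != 0 -> r ^ 2 %% 24 = 1.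
Proof. by do 24?[case: r => [|r] //]. Qed.

Lemma sq24 q : prime q -> 5 <= q -> q ^ 2 %% 24 = 1.
Proof.
move=> pq q5.
have h2 : q %% 2 != 0.
  apply/negP => d; have : 2 %| q by []; rewrite dvdn_prime2 //; move/eqP => e; lia.
have h3 : q %% 3 != 0.
  apply/negP => d; have : 3 %| q by []; rewrite dvdn_prime2 //; move/eqP => e; lia.
rewrite -modnXm; apply: small24; first by rewrite ltn_pmod.
  by rewrite (modn_dvdm _ (_ : 2 %| 24)).
by rewrite (modn_dvdm _ (_ : 3 %| 24)).
Qed.

Lemma nt_part (r : nat) (p : nat -> nat) :
  1 <= r ->
  (forall s, 1 <= s <= r -> prime (p s) /\ 5 <= p s) ->
  forall n j : nat, 
  legendre (24 * j + 1) (p r) = (-1)%R ->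
  let P := \prod_(1 <= s < r) (p s) ^ 2 in
  forall m, 24 * (P * p r * n + ((24 * j + 1) * P - 1) %/ 24) + 1 = m ^ 2 -> False.
Proof.
move=> r1 hp n j hleg P m hm.
have [prp pr5] : prime (p r) /\ 5 <= p r by apply: hp; rewrite r1 leqnn.
set pr := p r in prp pr5 hleg hm.
have P24 : P %% 24 = 1.
  rewrite /P big_seq; apply: (big_ind (fun x => x %% 24 = 1)) => //.
    by move=> x y hx hy; rewrite -modnMm hx hy.
  move=> s; rewrite mem_index_iota => hs.
  have [ps ps5] : prime (p s) /\ 5 <= p s by apply: hp; lia.
  exact: sq24.
set Q := \prod_(1 <= s < r) p s.
have PQ : P = Q * Q by rewrite /P /Q -big_split /=; apply: eq_bigr => i _; rewrite expnS expn1.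
have hP := divn_eq P 24; rewrite P24 in hP.
set K := P %/ 24 in hP.
have hE : ((24 * j + 1) * P - 1) %/ 24 = j * P + K.
  have -> : (24 * j + 1) * P - 1 = (j * P + K) * 24 by nia.
  by rewrite mulnK.
rewrite hE in hm.
set X := 24 * pr * n + (24 * j + 1).
have hmX : m ^ 2 = Q ^ 2 * X by rewrite -hm /X; nia.
have Q0 : 0 < Q by case: (posnP Q) => // Q0; move: P24; rewrite PQ Q0.
have : Q ^ 2 %| m ^ 2 by rewrite hmX dvdn_mulr.
rewrite dvdn_pexp2r // => /dvdnP[m' em].
have hX : m' ^ 2 = X.
  move: hmX; rewrite em expnMn mulnC => /eqP; rewrite eqn_pmul2l ?expn_gt0 ?Q0 //.
  by move/eqP.
have pr0 : 0 < pr by lia.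
have ex : [exists x : 'I_pr, (x ^ 2) %% pr == (24 * j + 1) %% pr].
  apply/existsP; exists (Ordinal (ltn_pmod m' pr0)) => /=.
  rewrite modnXm hX /X (_ : 24 * pr * n = (24 * n) * pr) ?modnMDl //; lia.
move: hleg; rewrite /legendre ex; by case: ifP.
Qed.


Lemma b2_eq N : b 2 N = #|[set g : {ffun 'I_N -> bool} | sumg g == N]|.
Proof.
have e1 : (((\prod_(i < N) FAn N i)`_N)%R : int) =
  ((#|[set f : {ffun 'I_N -> 'I_N.+1} | [forall i : 'I_N, (2 %| i.+1) ==> (val (f i) == 0)]
       && ((\sum_(i < N) i.+1 * f i) == N)]|)%N)%:R%R
  := coef_count (J := 'I_N.+1) (fun i m => i.+1 * m) (fun i m => (2 %| i.+1) ==> (val m == 0)).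
have e2 : (((\prod_(i < N) FDn i)`_N)%R : int) =
  ((#|[set f : {ffun 'I_N -> bool} | [forall i : 'I_N, true]
       && ((\sum_(i < N) i.+1 * f i) == N)]|)%N)%:R%R

  := coef_count (J := bool) (fun i c => i.+1 * c) (fun i c => true).
have := @glaisher N N (leqnn N); rewrite e1 e2 !natz => -[] e.
rewrite /b; apply: (etrans (etrans (eq_card _) e) (eq_card _)) => g.
  by rewrite !inE /is_partition_mult andbC.
by rewrite !inE /sumg; apply: andb_idl => _; apply/forallP.
Qed.

Theorem theorem3p7 (r : nat) (p : nat -> nat) :
  1 <= r ->
  (forall s, 1 <= s <= r -> prime (p s) /\ 5 <= p s) ->
  forall n j : nat, j <= p r - 1 ->
  legendre (24 * j + 1) (p r) = (-1)%R ->
  let P := \prod_(1 <= s < r) (p s) ^ 2 in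
  b 2 (P * p r * n + ((24 * j + 1) * P - 1) %/ 24) = 0 %[mod 2].
Proof.
move=> r1 hp n j _ hleg P.
case: (boolP (odd (b 2 (P * p r * n + ((24 * j + 1) * P - 1) %/ 24)))) => [od|ev]; last first.
  by rewrite modn2 (negbTE ev).
exfalso; rewrite b2_eq in od; have [m hm] := D_odd od.
exact: (nt_part r1 hp hleg hm).
Qed.
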